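(* Let $q$ be a prime power and $n\ge k\ge0$ integers. Let $V_1,\dots,V_k$ be subspaces of $\mathbb{F}_q^n$ such that $\dim\big(\sum_{i\in\Omega}V_i\big)\ge n-k+|\Omega|$ for all nonempty $\Omega\subseteq[k]$. Then there exist subspaces $V_i'\subseteq V_i$, $i=1,\dots,k$, such that (1) $\dim\big(\sum_{i\in\Omega}V_i'\big)\ge n-k+|\Omega|$ for all nonempty $\Omega\subseteq[k]$, and (2) $\dim V_i'=n-k+1$ for all $i\in[k]$. *)

(* Defs.v *)
From mathcomp Require Import all_boot all_order all_algebra all_field.
Set Implicit Arguments. Unset Strict Implicit. Unset Printing Implicit Defensive.

(* Main.v *)
Require Import Defs.
From mathcomp Require Import all_boot all_order all_algebra all_field.
From mathcomp Require Import zify.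
Import GRing.Theory.
Local Open Scope ring_scope.

Section Aux.
Variables (F : finFieldType) (n k : nat).

Definition Ssum (V : 'I_k -> {vspace 'rV[F]_n}) (Om : {set 'I_k}) :=
  (\sum_(j in Om) V j)%VS.
Definition good (V : 'I_k -> {vspace 'rV[F]_n}) :=
  forall Om : {set 'I_k}, Om != set0 -> (n - k + #|Om| <= \dim (Ssum V Om))%N.

Lemma submod V A B :
  (\dim (Ssum V (A :|: B)) + \dim (Ssum V (A :&: B)) <= \dim (Ssum V A) + \dim (Ssum V B))%N.
Proof.
have e := dimv_sum_cap (Ssum V A) (Ssum V B).
have h1 : (\dim (Ssum V (A :|: B)) <= \dim (Ssum V A + Ssum V B))%N.
  apply: dimvS; apply/subv_sumP => j; rewrite in_setU => /orP[] jA.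
    by apply: subv_trans (addvSl _ _); apply: (sumv_sup j) => //.
  by apply: subv_trans (addvSr _ _); apply: (sumv_sup j) => //.
have h2 : (\dim (Ssum V (A :&: B)) <= \dim (Ssum V A :&: Ssum V B))%N.
  apply: dimvS; apply/subv_sumP => j; rewrite in_setI => /andP[jA jB].
  by rewrite subv_cap; apply/andP; split; apply: (sumv_sup j).
lia.
Qed.


Lemma step V (i : 'I_k) : good V -> (n - k + 2 <= \dim (V i))%N ->
  exists V1 : 'I_k -> {vspace 'rV[F]_n}, (forall j, (V1 j <= V j)%VS) /\ good V1 /\
    (\dim (V1 i) < \dim (V i))%N.
Proof.
move=> gV hi.
pose tight (Om : {set 'I_k}) := (i \in Om) && (\dim (Ssum V Om) == n - k + #|Om|)%N.
have [v [vVi v0 vT]] : exists v, [/\ v \in V i, v != 0 &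
    forall Om, tight Om -> v \in Ssum V (Om :\ i)].
  case: (boolP [exists Om, tight Om]) => [/existsP[Om0 tOm0]|/existsPn nt]; last first.
    exists (vpick (V i)); split; first exact: memv_pick.
      by rewrite vpick0 -dimv_eq0; apply/eqP => e; rewrite e in hi; lia.
    by move=> Om; rewrite (negbTE (nt Om)).
  case: (@arg_minnP _ Om0 tight (fun T : {set 'I_k} => #|T|) tOm0) => T tT minT.
  have TsubOm : forall Om, tight Om -> T \subset Om.
    move=> Om tOm.
    have iX : i \in Om :&: T by rewrite in_setI; case/andP: tOm => -> _; case/andP: tT.
    have X0 : Om :&: T != set0 by apply/set0Pn; exists i.
    have Y0 : Om :|: T != set0.
      by apply/set0Pn; exists i; rewrite in_setU; case/andP: tT => ->; rewrite orbT.
    have := gV _ X0; have := gV _ Y0; have := submod V Om T; have := cardsUI Om T.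
    move/andP: tOm => [_ /eqP]; move/andP: tT => [_ /eqP] => e1 e2 c s g1 g2.
    have eqX : \dim (Ssum V (Om :&: T)) = (n - k + #|Om :&: T|)%N by lia.
    have := minT (Om :&: T); rewrite /tight iX eqX eqxx => /(_ isT) cardle.
    have : Om :&: T == T by rewrite eqEcard subsetIr cardle.
    by move/eqP <-; exact: subsetIl.
  case/andP: tT => iT /eqP tT.
  set W := Ssum V (T :\ i).
  have ST : Ssum V T = (V i + W)%VS.
    rewrite /Ssum (bigD1 i) //=; congr (_ + _)%VS.
    by apply: eq_bigl => j; rewrite in_setD1 andbC.
  have cT := cardsD1 i T; rewrite iT /= in cT.
  have dimW : (#|T :\ i| <= \dim W)%N.
    case: (boolP (T :\ i == set0)) => [/eqP->|ne]; first by rewrite cards0.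
    have := gV _ ne; rewrite /W; lia.
  have dc := dimv_sum_cap (V i) W.
  rewrite -ST tT in dc.
  exists (vpick (V i :&: W)%VS).
  have := memv_pick (V i :&: W)%VS; rewrite memv_cap => /andP[m1 m2].
  split => //.
    rewrite vpick0 -dimv_eq0 -lt0n. set x := #|T| in cT dc. set y := \dim W in dimW dc. set z := \dim (V i) in hi dc. set c := #|T :\ i| in cT dimW. set w := \dim (V i :&: W) in dc *. clearbody x y z c w. move: hi cT dimW dc. clear. move=> hi cT dimW dc. lia.
  move=> Om tOm; have sub := TsubOm _ tOm.
  apply: subvP m2; apply/subv_sumP => j; rewrite in_setD1 => /andP[ji jT].
  by apply: (sumv_sup j) => //; rewrite in_setD1 ji (subsetP sub).
pose H := (V i :\: <[v]>)%VS.
have HVi : (H <= V i)%VS by apply: diffvSl.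
have ViHv : (V i <= H + <[v]>)%VS.
  rewrite -{1}(addv_diff_cap (V i) <[v]>); apply: addvS => //; exact: capvSr.
have dimH : (\dim H + 1 = \dim (V i))%N.
  have := dimv_cap_compl (V i) <[v]>.
  have -> : (V i :&: <[v]> = <[v]>)%VS by apply/capv_idPr.
  by rewrite dim_vline v0 addnC.
pose V1 j := if j == i then H else V j.
have V1i : V1 i = H by rewrite /V1 eqxx.
have V1j : forall j, j != i -> V1 j = V j by move=> j /negbTE; rewrite /V1 => ->.
exists V1; split.
  by move=> j; case: (eqVneq j i) => [->|ji]; [rewrite V1i | rewrite V1j].
split; last by rewrite V1i; lia.
move=> Om Om0.
have S1S : (Ssum V Om <= Ssum V1 Om + <[v]>)%VS.
  apply/subv_sumP => j; case: (eqVneq j i) => [->|ji] jOm.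
    apply: subv_trans ViHv _; apply: addvS => //; rewrite -V1i.
    by apply: (sumv_sup i).
  apply: subv_trans (addvSl _ _); apply: (sumv_sup j) => //; by rewrite V1j.
have dS : (\dim (Ssum V Om) <= \dim (Ssum V1 Om) + 1)%N.
  apply: leq_trans (dimvS S1S) _.
  have := dimv_sum_cap (Ssum V1 Om) <[v]>; rewrite dim_vline v0 /=; lia.
have gO := gV _ Om0.
case: (boolP (i \in Om)) => iOm; last first.
  apply: leq_trans gO (dimvS _); apply/subv_sumP => j jOm.
  rewrite -V1j; last by apply: contraNneq iOm => <-.
  exact: (sumv_sup j).
case: (boolP (tight Om)) => tOm.
  have vS1 : (<[v]> <= Ssum V1 Om)%VS.
    apply: subv_trans (vT _ tOm) _; apply/subv_sumP => j.
    rewrite in_setD1 => /andP[ji jOm]; rewrite -V1j //; exact: (sumv_sup j).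
  apply: leq_trans gO (dimvS _); apply: subv_trans S1S _.
  by rewrite subv_add subvv vS1.
have : (\dim (Ssum V Om) != n - k + #|Om|)%N by move: tOm; rewrite /tight iOm.
move/eqP => ne; lia.
Qed.

End Aux.
Arguments good {F n k}.
Arguments Ssum {F n k}.
Arguments step {F n k V i}.

Theorem mainTheorem10 (F : finFieldType) (n k : nat) (hkn : (k <= n)%N)
  (V : 'I_k -> {vspace 'rV[F]_n}) :
  (forall Om : {set 'I_k}, Om != set0 ->
     (n - k + #|Om| <= \dim (\sum_(i in Om) V i)%VS)%N) ->
  exists V' : 'I_k -> {vspace 'rV[F]_n},
    (forall i, (V' i <= V i)%VS) /\
    (forall Om : {set 'I_k}, Om != set0 ->
       (n - k + #|Om| <= \dim (\sum_(i in Om) V' i)%VS)%N) /\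
    (forall i, \dim (V' i) = (n - k + 1)%N).
Proof.
move=> hV.
suff main : forall m (W : 'I_k -> {vspace 'rV[F]_n}), good W ->
    (\sum_(i < k) \dim (W i) < m)%N ->
  exists V' : 'I_k -> {vspace 'rV[F]_n},
    (forall i, (V' i <= W i)%VS) /\ good V' /\
    (forall i, \dim (V' i) = (n - k + 1)%N).
  exact: (main _ V hV (ltnSn _)).
elim=> [|m IH] W gW hm; first by [].
case: (boolP [forall j, \dim (W j) == (n - k + 1)%N]) => [/forallP al | /forallPn [j hj]].
  by exists W; split; [move=> i; exact: subvv | split; [exact: gW | move=> i; exact/eqP]].
have s0 : [set j] != set0 by apply/set0Pn; exists j; rewrite in_set1.
have := gW _ s0; rewrite /Ssum big_set1 cards1 => hj1.
have hj2 : (n - k + 2 <= \dim (W j))%N by move/eqP: hj => hj; lia.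
have [W1 [s1 [g1 d1]]] := step gW hj2.
have lt : (\sum_(i < k) \dim (W1 i) < \sum_(i < k) \dim (W i))%N.
  rewrite (bigD1 j) //= [X in (_ < X)%N](bigD1 j) //=.
  rewrite -addSn; apply: leq_add => //.
  by apply: leq_sum => i _; apply: dimvS.
have [V' [s' [g' d']]] := IH W1 g1 (leq_trans lt hm).
exists V'; split => //; move=> i; exact: subv_trans (s' i) (s1 i).
Qed.
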